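(* Let $X$ be a topological space with an open cover $(U_i)_{i\in I}$, and let $\mathcal{P}$ be a 2-gerbe on $X$. Suppose given two families of local trivializing data $(x_i,\phi_{ij},g_{ijk},m_{ijk})$ and $(x'_i,\phi'_{ij},g'_{ijk},m'_{ijk})$, together with comparison data $(\chi_i,\vartheta_{ij},\zeta_{ij})$, and let $\lambda_{ij},\nu_{ijkl},\lambda'_{ij},\nu'_{ijkl},B'_{ijk},r_i,R_i,b_{ijk},Z_{ij}$ be as defined in the context. Then over $U_{ijkl}$ the following two composite 2-arrows $$\lambda'_{ij}(g'_{jkl})\,g'_{ijl}\,\vartheta_{il}\ \Longrightarrow\ \lambda'_{ij}\lambda'_{jk}(\vartheta_{kl})\,\lambda'_{ij}(\vartheta_{jk})\,\vartheta_{ij}\,r_i(g_{ijk})\,r_i(g_{ikl})$$ coincide (i.e. the cube of 2-arrows with faces $r_i(\nu_{ijkl})$, $\nu'_{ijkl}$, $b_{ijk}$, $b_{ijl}$, $b_{ikl}$, $\lambda'_{ij}(b_{jkl})$, $Z_{ij}(g_{jkl})$ and $B'_{ijk}(\vartheta_{kl})$ commutes): (1) $(\lambda'_{ij}(g'_{jkl})\,b_{ijl})$, followed by $(\lambda'_{ij}(b_{jkl})\,\vartheta_{ij}\,r_i(g_{ijl}))$, followed by $(\lambda'_{ij}\lambda'_{jk}(\vartheta_{kl})\,\lambda'_{ij}(\vartheta_{jk})\,Z_{ij}(g_{jkl})\,r_i(g_{ijl}))$, followed by $(\lambda'_{ij}\lambda'_{jk}(\vartheta_{kl})\,\lambda'_{ij}(\vartheta_{jk})\,\vartheta_{ij}\,r_i(\nu_{ijkl}))$;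 (2) $(\nu'_{ijkl}\,\vartheta_{il})$, followed by $(g'_{ijk}\,b_{ikl})$, followed by $(B'_{ijk}(\vartheta_{kl})\,\vartheta_{ik}\,r_i(g_{ikl}))$, followed by $(\lambda'_{ij}\lambda'_{jk}(\vartheta_{kl})\,b_{ijk}\,r_i(g_{ikl}))$.
   Context: A 2-groupoid is a 2-category whose 1-arrows are invertible up to a 2-arrow and whose 2-arrows are strictly invertible. A 2-gerbe $\mathcal{P}$ on $X$ is a 2-stack in 2-groupoids on $X$ (a fibered 2-category in 2-groupoids over the open sets of $X$ whose arrow categories form stacks and for which 2-descent for objects is effective) which is locally non-empty and locally connected. For an object $x\in\mathcal{P}_U$, $\mathcal{G}_x$ is the group-like monoidal stack of 1-arrows $x\to x$ (tensor = composition). $U_{ij}=U_i\cap U_j$ etc.; everything is tacitly restricted to the relevant intersection. Composition of 1-arrows and whiskering are written by juxtaposition ($ab$ = first $b$ then $a$), $\circ$ denotes vertical composition of 2-arrows, and associativity constraints and structure isomorphisms of monoidal functors are suppressed. First data: objects $x_i\in\mathcal{P}_{U_i}$, 1-arrows $\phi_{ij}:x_j\to x_i$ over $U_{ij}$ with chosen quasi-inverses; the monoidal equivalence $\lambda_{ij}:\mathcal{G}_{x_j}\to\mathcal{G}_{x_i}$, $\gamma\mapsto\phi_{ij}\gamma\phi_{ij}^{-1}$, with natural 2-arrows $M_{ij}(\gamma):\phi_{ij}\gamma\Rightarrow\lambda_{ij}(\gamma)\phi_{ij}$; objects $g_{ijk}\in\mathcal{G}_{x_i}$ over $U_{ijk}$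 and 2-arrows $m_{ijk}:g_{ijk}\phi_{ik}\Rightarrow\phi_{ij}\phi_{jk}$; and $\nu_{ijkl}:\lambda_{ij}(g_{jkl})g_{ijl}\Rightarrow g_{ijk}g_{ikl}$ the unique 2-arrow with $(\phi_{ij}m_{jkl})\circ(M_{ij}(g_{jkl})^{-1}\phi_{jl})\circ(\lambda_{ij}(g_{jkl})m_{ijl})=(m_{ijk}\phi_{kl})\circ(g_{ijk}m_{ikl})\circ(\nu_{ijkl}\phi_{il})$. The second data $x'_i,\phi'_{ij},\lambda'_{ij},M'_{ij},g'_{ijk},m'_{ijk},\nu'_{ijkl}$ are of exactly the same kind. For $\gamma\in\mathcal{G}_{x'_k}$, $B'_{ijk}(\gamma):g'_{ijk}\lambda'_{ik}(\gamma)\Rightarrow\lambda'_{ij}\lambda'_{jk}(\gamma)g'_{ijk}$ is the unique 2-arrow with $(\lambda'_{ij}\lambda'_{jk}(\gamma)m'_{ijk})\circ(B'_{ijk}(\gamma)\phi'_{ik})=(M'_{ij}(\lambda'_{jk}(\gamma))\phi'_{jk})\circ(\phi'_{ij}M'_{jk}(\gamma))\circ(m'_{ijk}\gamma)\circ(g'_{ijk}M'_{ik}(\gamma)^{-1})$. Comparison data: 1-arrows $\chi_i:x_i\to x'_i$ over $U_i$ (with quasi-inverses), inducing monoidal equivalences $r_i:\mathcal{G}_{x_i}\to\mathcal{G}_{x'_i}$, $u\mapsto\chi_iu\chi_i^{-1}$, with natural 2-arrows $R_i(u):\chi_iu\Rightarrow r_i(u)\chi_i$; objects $\vartheta_{ij}\in\mathcal{G}_{x'_i}$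 over $U_{ij}$ and 2-arrows $\zeta_{ij}:\phi'_{ij}\chi_j\Rightarrow\vartheta_{ij}\chi_i\phi_{ij}$. Define $b_{ijk}:g'_{ijk}\vartheta_{ik}\Rightarrow\lambda'_{ij}(\vartheta_{jk})\vartheta_{ij}r_i(g_{ijk})$ over $U_{ijk}$ as the unique 2-arrow such that, as 2-arrows $g'_{ijk}\phi'_{ik}\chi_k\Rightarrow\lambda'_{ij}(\vartheta_{jk})\vartheta_{ij}\chi_i\phi_{ij}\phi_{jk}$, $$(\lambda'_{ij}(\vartheta_{jk})\zeta_{ij}\phi_{jk})\circ(M'_{ij}(\vartheta_{jk})\chi_j\phi_{jk})\circ(\phi'_{ij}\zeta_{jk})\circ(m'_{ijk}\chi_k)=(\lambda'_{ij}(\vartheta_{jk})\vartheta_{ij}\chi_im_{ijk})\circ(\lambda'_{ij}(\vartheta_{jk})\vartheta_{ij}R_i(g_{ijk})^{-1}\phi_{ik})\circ(b_{ijk}\chi_i\phi_{ik})\circ(g'_{ijk}\zeta_{ik}).$$ For $g\in\mathcal{G}_{x_j}$ over $U_{ij}$, define $Z_{ij}(g):\lambda'_{ij}(r_j(g))\vartheta_{ij}\Rightarrow\vartheta_{ij}r_i(\lambda_{ij}(g))$ as the unique 2-arrow such that $$(Z_{ij}(g)\chi_i\phi_{ij})\circ(\lambda'_{ij}(r_j(g))\zeta_{ij})=(\vartheta_{ij}R_i(\lambda_{ij}(g))\phi_{ij})\circ(\vartheta_{ij}\chi_iM_{ij}(g))\circ(\zeta_{ij}g)\circ(\phi'_{ij}R_j(g)^{-1})\circ(M'_{ij}(r_j(g))^{-1}\chi_j).$$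 Finally $r_i(\nu_{ijkl}):r_i(\lambda_{ij}(g_{jkl}))r_i(g_{ijl})\Rightarrow r_i(g_{ijk})r_i(g_{ikl})$ and $\lambda'_{ij}(b_{jkl}):\lambda'_{ij}(g'_{jkl})\lambda'_{ij}(\vartheta_{jl})\Rightarrow\lambda'_{ij}\lambda'_{jk}(\vartheta_{kl})\lambda'_{ij}(\vartheta_{jk})\lambda'_{ij}(r_j(g_{jkl}))$ are the images of $\nu_{ijkl}$ and $b_{jkl}$ under the monoidal functors $r_i$ and $\lambda'_{ij}$. *)

(* Defs.v *)
Set Implicit Arguments.
Unset Strict Implicit.

(* Objects, 1-cells [Hom a b] (from a to b), and 2-cells [Cell a b] between
   parallel 1-cells a -> b; a 2-cell carries its source and target 1-cells.
   [comp g f] = "first f then g" (juxtaposition gf); [vcomp β α] = β ∘ α;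
   [hcomp β α] = horizontal composite (juxtaposition βα). *)
Record TwoGroupoid := {
  Obj : Type;
  Hom : Obj -> Obj -> Type;
  Cell : Obj -> Obj -> Type;
  id1 : forall a, Hom a a;
  comp : forall a b c, Hom b c -> Hom a b -> Hom a c;
  src2 : forall a b, Cell a b -> Hom a b;
  tgt2 : forall a b, Cell a b -> Hom a b;
  id2 : forall a b, Hom a b -> Cell a b;
  vcomp : forall a b, Cell a b -> Cell a b -> Cell a b;
  hcomp : forall a b c, Cell b c -> Cell a b -> Cell a c;
  inv2 : forall a b, Cell a b -> Cell a b;
  compA : forall a b c d (f : Hom c d) (g : Hom b c) (h : Hom a b),
      comp f (comp g h) = comp (comp f g) h;
  comp1l : forall a b (f : Hom a b), comp (id1 b) f = f;
  comp1r : forall a b (f : Hom a b), comp f (id1 a) = f;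
  src2_id : forall a b (f : Hom a b), src2 (id2 f) = f;
  tgt2_id : forall a b (f : Hom a b), tgt2 (id2 f) = f;
  src2_v : forall a b (al be : Cell a b),
      tgt2 al = src2 be -> src2 (vcomp be al) = src2 al;
  tgt2_v : forall a b (al be : Cell a b),
      tgt2 al = src2 be -> tgt2 (vcomp be al) = tgt2 be;
  src2_h : forall a b c (be : Cell b c) (al : Cell a b),
      src2 (hcomp be al) = comp (src2 be) (src2 al);
  tgt2_h : forall a b c (be : Cell b c) (al : Cell a b),
      tgt2 (hcomp be al) = comp (tgt2 be) (tgt2 al);
  vcompA : forall a b (al be ga : Cell a b),
      tgt2 al = src2 be -> tgt2 be = src2 ga ->
      vcomp ga (vcomp be al) = vcomp (vcomp ga be) al;
  vcomp1r : forall a b (al : Cell a b), vcomp al (id2 (src2 al)) = al;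
  vcomp1l : forall a b (al : Cell a b), vcomp (id2 (tgt2 al)) al = al;
  hcompA : forall a b c d (ga : Cell c d) (be : Cell b c) (al : Cell a b),
      hcomp ga (hcomp be al) = hcomp (hcomp ga be) al;
  hcomp1l : forall a b (al : Cell a b), hcomp (id2 (id1 b)) al = al;
  hcomp1r : forall a b (al : Cell a b), hcomp al (id2 (id1 a)) = al;
  hcomp_id2 : forall a b c (g : Hom b c) (f : Hom a b),
      hcomp (id2 g) (id2 f) = id2 (comp g f);
  interchange : forall a b c (be be' : Cell b c) (al al' : Cell a b),
      tgt2 be = src2 be' -> tgt2 al = src2 al' ->
      hcomp (vcomp be' be) (vcomp al' al) = vcomp (hcomp be' al') (hcomp be al);
  src2_inv : forall a b (al : Cell a b), src2 (inv2 al) = tgt2 al;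
  tgt2_inv : forall a b (al : Cell a b), tgt2 (inv2 al) = src2 al;
  inv2_l : forall a b (al : Cell a b), vcomp (inv2 al) al = id2 (src2 al);
  inv2_r : forall a b (al : Cell a b), vcomp al (inv2 al) = id2 (tgt2 al);
  hom_weak_inv : forall a b (f : Hom a b), exists (g : Hom b a)
      (e : Cell a a) (e' : Cell b b),
      src2 e = comp g f /\ tgt2 e = id1 a /\ src2 e' = comp f g /\ tgt2 e' = id1 b
}.

Arguments Hom : clear implicits.
Arguments Cell : clear implicits.
Arguments id1 {_} a.
Arguments comp {_ a b c} _ _.
Arguments src2 {_ a b} _.
Arguments tgt2 {_ a b} _.
Arguments id2 {_ a b} _.
Arguments vcomp {_ a b} _ _.
Arguments hcomp {_ a b c} _ _.
Arguments inv2 {_ a b} _.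

Record qinv (C : TwoGroupoid) (a b : Obj C) (f : Hom C a b) := {
  qi : Hom C b a;
  qi_ep : Cell C a a;
  qi_ep_src : src2 qi_ep = comp qi f;
  qi_ep_tgt : tgt2 qi_ep = id1 a;
  qi_et : Cell C b b;
  qi_et_src : src2 qi_et = comp f qi;
  qi_et_tgt : tgt2 qi_et = id1 b
}.
Arguments qi {C a b f} _.
Arguments qi_ep {C a b f} _.
Arguments qi_et {C a b f} _.

Section Constructions.
Variable C : TwoGroupoid.
Local Notation Hom := (Hom C).
Local Notation Cell := (Cell C).

Definition whL {a b c : Obj C} (f : Hom b c) (al : Cell a b) : Cell a c :=
  hcomp (id2 f) al.
Definition whR {a b c : Obj C} (al : Cell b c) (f : Hom a b) : Cell a c :=
  hcomp al (id2 f).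
Definition wh {a b c d : Obj C} (f : Hom c d) (al : Cell b c) (g : Hom a b)
  : Cell a d := whL f (whR al g).

Section Conj.
Variables (a b : Obj C) (phi : Hom a b) (Q : qinv phi).

Definition lam (ga : Hom a a) : Hom b b := comp (comp phi ga) (qi Q).
Definition lam2 (be : Cell a a) : Cell b b := wh phi be (qi Q).
(* the natural 2-arrow  M(γ) : φ γ => λ(γ) φ *)
Definition Mc (ga : Hom a a) : Cell a b :=
  whL (comp phi ga) (inv2 (qi_ep Q)).
(* monoidal structure  λ(u) λ(v) => λ(u v) *)
Definition mu (u v : Hom a a) : Cell b b :=
  whL (comp phi u) (whR (qi_ep Q) (comp v (qi Q))).
(* λ(u) λ(v) λ(w) => λ(u v w) *)
Definition mu3 (u v w : Hom a a) : Cell b b :=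
  vcomp (mu u (comp v w)) (whL (lam u) (mu v w)).
(* image of a 2-arrow  β : u1 u2 => v1 v2  under the monoidal functor λ:
   λ(u1) λ(u2) => λ(v1) λ(v2) *)
Definition mon22 (u1 u2 v1 v2 : Hom a a) (be : Cell a a) : Cell b b :=
  vcomp (inv2 (mu v1 v2)) (vcomp (lam2 be) (mu u1 u2)).
(* image of  β : u1 u2 => v1 v2 v3 :  λ(u1) λ(u2) => λ(v1) λ(v2) λ(v3) *)
Definition mon23 (u1 u2 v1 v2 v3 : Hom a a) (be : Cell a a) : Cell b b :=
  vcomp (inv2 (mu3 v1 v2 v3)) (vcomp (lam2 be) (mu u1 u2)).
End Conj.

Definition is_m {xa xb xc : Obj C} (g : Hom xa xa) (phac : Hom xc xa)
  (phab : Hom xb xa) (phbc : Hom xc xb) (m : Cell xc xa) : Prop :=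
  src2 m = comp g phac /\ tgt2 m = comp phab phbc.

Definition is_zeta {xa xb ya yb : Obj C} (psab : Hom yb ya) (chb : Hom xb yb)
  (thab : Hom ya ya) (cha : Hom xa ya) (phab : Hom xb xa) (ze : Cell xb ya)
  : Prop :=
  src2 ze = comp psab chb /\ tgt2 ze = comp (comp thab cha) phab.

Definition is_nu {xi xj xk xl : Obj C}
  (phij : Hom xj xi) (Qij : qinv phij) (phik : Hom xk xi) (phil : Hom xl xi)
  (phjk : Hom xk xj) (phjl : Hom xl xj) (phkl : Hom xl xk)
  (gijk gijl gikl : Hom xi xi) (gjkl : Hom xj xj)
  (mijk : Cell xk xi) (mijl mikl : Cell xl xi) (mjkl : Cell xl xj)
  (nu : Cell xi xi) : Prop :=
  src2 nu = comp (lam Qij gjkl) gijl /\ tgt2 nu = comp gijk gikl /\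
  vcomp (whL phij mjkl)
    (vcomp (whR (inv2 (Mc Qij gjkl)) phjl) (whL (lam Qij gjkl) mijl))
  = vcomp (whR mijk phkl) (vcomp (whL gijk mikl) (whR nu phil)).

Definition is_B {yi yj yk : Obj C}
  (psij : Hom yj yi) (Qij : qinv psij) (psjk : Hom yk yj) (Qjk : qinv psjk)
  (psik : Hom yk yi) (Qik : qinv psik)
  (hijk : Hom yi yi) (nijk : Cell yk yi) (ga : Hom yk yk) (B : Cell yi yi)
  : Prop :=
  src2 B = comp hijk (lam Qik ga) /\
  tgt2 B = comp (lam Qij (lam Qjk ga)) hijk /\
  vcomp (whL (lam Qij (lam Qjk ga)) nijk) (whR B psik)
  = vcomp (whR (Mc Qij (lam Qjk ga)) psjk)
      (vcomp (whL psij (Mc Qjk ga))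
         (vcomp (whR nijk ga) (whL hijk (inv2 (Mc Qik ga))))).

Definition is_b {xi xj xk yi yj yk : Obj C}
  (phij : Hom xj xi) (phjk : Hom xk xj) (phik : Hom xk xi)
  (psij : Hom yj yi) (Qsij : qinv psij) (psjk : Hom yk yj) (psik : Hom yk yi)
  (chi : Hom xi yi) (Qci : qinv chi) (chj : Hom xj yj) (chk : Hom xk yk)
  (thij : Hom yi yi) (thjk : Hom yj yj) (thik : Hom yi yi)
  (zeij : Cell xj yi) (zejk : Cell xk yj) (zeik : Cell xk yi)
  (gijk : Hom xi xi) (hijk : Hom yi yi) (mijk : Cell xk xi) (nijk : Cell yk yi)
  (b : Cell yi yi) : Prop :=
  src2 b = comp hijk thik /\
  tgt2 b = comp (comp (lam Qsij thjk) thij) (lam Qci gijk) /\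
  vcomp (wh (lam Qsij thjk) zeij phjk)
    (vcomp (whR (Mc Qsij thjk) (comp chj phjk))
       (vcomp (whL psij zejk) (whR nijk chk)))
  = vcomp (whL (comp (comp (lam Qsij thjk) thij) chi) mijk)
      (vcomp (wh (comp (lam Qsij thjk) thij) (inv2 (Mc Qci gijk)) phik)
         (vcomp (whR b (comp chi phik)) (whL hijk zeik))).

Definition is_Z {xi xj yi yj : Obj C}
  (phij : Hom xj xi) (Qij : qinv phij) (psij : Hom yj yi) (Qsij : qinv psij)
  (chi : Hom xi yi) (Qci : qinv chi) (chj : Hom xj yj) (Qcj : qinv chj)
  (thij : Hom yi yi) (zeij : Cell xj yi) (g : Hom xj xj) (Z : Cell yi yi)
  : Prop :=
  src2 Z = comp (lam Qsij (lam Qcj g)) thij /\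
  tgt2 Z = comp thij (lam Qci (lam Qij g)) /\
  vcomp (whR Z (comp chi phij)) (whL (lam Qsij (lam Qcj g)) zeij)
  = vcomp (wh thij (Mc Qci (lam Qij g)) phij)
      (vcomp (whL (comp thij chi) (Mc Qij g))
         (vcomp (whR zeij g)
            (vcomp (whL psij (inv2 (Mc Qcj g)))
               (whR (inv2 (Mc Qsij (lam Qcj g))) chj)))).

End Constructions.

(* Main.v *)
Require Import Defs.
Set Implicit Arguments.
Unset Strict Implicit.


Section Infra.
Variable C : TwoGroupoid.

Definition Ly {s p q t : Obj C} (U : Hom C q t) (al : Cell C p q) (V : Hom C s p) : Cell C s t :=
  hcomp (id2 U) (hcomp al (id2 V)).
Definition ty {a b : Obj C} (x : Cell C a b) (A B : Hom C a b) := src2 x = A /\ tgt2 x = B.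

Lemma ty_vc a b (x y : Cell C a b) A B B' D : ty x A B -> ty y B' D -> B = B' -> ty (vcomp y x) A D.
Proof. intros [h1 h2] [h3 h4] e. subst. split.
 - rewrite src2_v; auto; congruence.
 - rewrite tgt2_v; auto; congruence. Qed.
Lemma ty_hc a b c (y : Cell C b c) (x : Cell C a b) A B A' B' : ty y A B -> ty x A' B' ->
  ty (hcomp y x) (comp A A') (comp B B').
Proof. intros [h1 h2] [h3 h4]. split; [rewrite src2_h|rewrite tgt2_h]; congruence. Qed.
Lemma ty_id a b (f : Hom C a b) : ty (id2 f) f f.
Proof. split; [apply src2_id|apply tgt2_id]. Qed.
Lemma ty_inv a b (x : Cell C a b) A B : ty x A B -> ty (inv2 x) B A.
Proof. intros [h1 h2]; split; [rewrite src2_inv|rewrite tgt2_inv]; auto. Qed.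
Lemma ty_Ly s p q t (U : Hom C q t) (x : Cell C p q) (V : Hom C s p) A B :
  ty x A B -> ty (Ly U x V) (comp U (comp A V)) (comp U (comp B V)).
Proof. intros h. unfold Ly. apply ty_hc. apply ty_id. apply ty_hc; auto. apply ty_id. Qed.
Lemma ty_ep a b (f : Hom C a b) (Q : qinv f) : ty (qi_ep Q) (comp (qi Q) f) (id1 a).
Proof. split; [apply qi_ep_src|apply qi_ep_tgt]. Qed.
Lemma ty_et a b (f : Hom C a b) (Q : qinv f) : ty (qi_et Q) (comp f (qi Q)) (id1 b).
Proof. split; [apply qi_et_src|apply qi_et_tgt]. Qed.
Lemma ty_conv a b (x : Cell C a b) A B A' B' : ty x A B -> A = A' -> B = B' -> ty x A' B'.
Proof. intros h e1 e2; subst; auto. Qed.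
Lemma side_tg a b (x y : Cell C a b) A B B' D : ty x A B -> ty y B' D -> B = B' -> tgt2 x = src2 y.
Proof. intros [h1 h2] [h3 h4] e; congruence. Qed.
Lemma tgt_eq a b (x : Cell C a b) A B H : ty x A B -> B = H -> tgt2 x = H.
Proof. intros [h1 h2] e; congruence. Qed.
Lemma src_eq a b (x : Cell C a b) A B H : ty x A B -> A = H -> src2 x = H.
Proof. intros [h1 h2] e; congruence. Qed.

Lemma vid_l a b (x : Cell C a b) f : tgt2 x = f -> vcomp (id2 f) x = x.
Proof. intros <-; apply vcomp1l. Qed.
Lemma vid_r a b (x : Cell C a b) f : src2 x = f -> vcomp x (id2 f) = x.
Proof. intros <-; apply vcomp1r. Qed.

Lemma hL_v a b c (f : Hom C b c) (x y : Cell C a b) : tgt2 x = src2 y ->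
  hcomp (id2 f) (vcomp y x) = vcomp (hcomp (id2 f) y) (hcomp (id2 f) x).
Proof. intros e. rewrite <- interchange; auto. rewrite vid_l; auto. apply tgt2_id.
  rewrite tgt2_id, src2_id; auto. Qed.
Lemma hR_v a b c (f : Hom C a b) (x y : Cell C b c) : tgt2 x = src2 y ->
  hcomp (vcomp y x) (id2 f) = vcomp (hcomp y (id2 f)) (hcomp x (id2 f)).
Proof. intros e. rewrite <- interchange; auto. rewrite (vid_l (x:=id2 f)); auto. apply tgt2_id.
  rewrite tgt2_id, src2_id; auto. Qed.

Lemma inv_unique a b (x y : Cell C a b) : vcomp y x = id2 (src2 x) -> src2 y = tgt2 x -> y = inv2 x.
Proof. intros h hs.
  transitivity (vcomp y (vcomp x (inv2 x))).
  - rewrite inv2_r. rewrite vid_r; auto.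
  - rewrite vcompA. rewrite h. apply vid_l. rewrite tgt2_inv. auto.
    rewrite tgt2_inv; auto. auto. Qed.

Lemma inv_v a b (x y : Cell C a b) : tgt2 x = src2 y -> inv2 (vcomp y x) = vcomp (inv2 x) (inv2 y).
Proof. intros e. symmetry. apply inv_unique.
  - assert (E1: vcomp (inv2 y) (vcomp y x) = x).
    { rewrite (@vcompA _ _ _ x y (inv2 y)); auto. rewrite inv2_l. apply vid_l. auto.
      rewrite src2_inv; auto. }
    rewrite <- (@vcompA _ _ _ (vcomp y x) (inv2 y) (inv2 x)).
    + rewrite E1. rewrite inv2_l. rewrite src2_v; auto.
    + rewrite tgt2_v, src2_inv; auto.
    + rewrite tgt2_inv, src2_inv; auto.
  - rewrite src2_v. rewrite src2_inv, tgt2_v; auto. rewrite tgt2_inv, src2_inv; auto.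
Qed.

Lemma inv_inv a b (x : Cell C a b) : inv2 (inv2 x) = x.
Proof. symmetry. apply inv_unique. rewrite inv2_r, src2_inv; auto. rewrite tgt2_inv; auto. Qed.

Lemma hid a b c (f : Hom C b c) (g : Hom C a b) : hcomp (id2 f) (id2 g) = id2 (comp f g).
Proof. apply hcomp_id2. Qed.

Lemma inv_hL a b c (f : Hom C b c) (x : Cell C a b) : inv2 (hcomp (id2 f) x) = hcomp (id2 f) (inv2 x).
Proof. symmetry. apply inv_unique.
  - rewrite <- interchange. rewrite inv2_l, vid_l, src2_h, src2_id, hid; auto.
    rewrite tgt2_id; auto. rewrite tgt2_id, src2_id; auto. rewrite src2_inv; auto.
  - rewrite src2_h, tgt2_h, src2_id, tgt2_id, src2_inv; auto. Qed.
Lemma inv_hR a b c (f : Hom C a b) (x : Cell C b c) : inv2 (hcomp x (id2 f)) = hcomp (inv2 x) (id2 f).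
Proof. symmetry. apply inv_unique.
  - rewrite <- interchange. rewrite inv2_l, (vid_l (x:=id2 f)), src2_h, src2_id, hid; auto.
    rewrite tgt2_id; auto. rewrite src2_inv; auto. rewrite tgt2_id, src2_id; auto.
  - rewrite src2_h, tgt2_h, src2_id, tgt2_id, src2_inv; auto. Qed.

Lemma inv_Ly s p q t (U : Hom C q t) (x : Cell C p q) (V : Hom C s p) :
  inv2 (Ly U x V) = Ly U (inv2 x) V.
Proof. unfold Ly. rewrite inv_hL, inv_hR; auto. Qed.
Lemma hL_Ly s p q t u (f : Hom C t u) (U : Hom C q t) (x : Cell C p q) (V : Hom C s p) :
  hcomp (id2 f) (Ly U x V) = Ly (comp f U) x V.
Proof. unfold Ly. rewrite hcompA, hid; auto. Qed.
Lemma hR_Ly r s p q t (f : Hom C r s) (U : Hom C q t) (x : Cell C p q) (V : Hom C s p) :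
  hcomp (Ly U x V) (id2 f) = Ly U x (comp V f).
Proof. unfold Ly. rewrite <- !hcompA, hid; auto. Qed.
Lemma Ly_intro p q (x : Cell C p q) : x = Ly (id1 q) x (id1 p).
Proof. unfold Ly. rewrite hcomp1l, hcomp1r; auto. Qed.
Lemma vA a b (x y z : Cell C a b) : tgt2 x = src2 y -> tgt2 y = src2 z ->
  vcomp (vcomp z y) x = vcomp z (vcomp y x).
Proof. intros; symmetry; apply vcompA; auto. Qed.
Lemma vAr a b (x y z : Cell C a b) : tgt2 x = src2 y -> tgt2 y = src2 z ->
  vcomp z (vcomp y x) = vcomp (vcomp z y) x.
Proof. intros; apply vcompA; auto. Qed.

End Infra.

Ltac wnorm_in_goal := unfold lam; repeat rewrite <- compA; repeat rewrite comp1l; repeat rewrite comp1r; repeat rewrite <- compA.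
Ltac homeq := unfold lam; repeat rewrite <- compA; repeat rewrite comp1l; repeat rewrite comp1r;
  repeat rewrite <- compA; reflexivity.

Ltac tyinf := lazymatch goal with
 | |- ty (vcomp _ _) _ _ => eapply ty_vc; [tyinf | tyinf | homeq]
 | |- ty (hcomp _ _) _ _ => eapply ty_hc; [tyinf|tyinf]
 | |- ty (Ly _ _ _) _ _ => eapply ty_Ly; tyinf
 | |- ty (inv2 _) _ _ => eapply ty_inv; tyinf
 | |- ty (id2 _) _ _ => eapply ty_id
 | |- ty (qi_ep _) _ _ => eapply ty_ep
 | |- ty (qi_et _) _ _ => eapply ty_et
 | |- ty ?x _ _ => eassumption
 end.

Ltac side := lazymatch goal with
 | |- tgt2 ?r = src2 _ => first [ eapply side_tg; [tyinf|tyinf|homeq]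
      | match goal with H : tgt2 r = _ |- _ => rewrite H; symmetry; eapply src_eq; [tyinf|homeq] end ]
 | |- tgt2 _ = _ => eapply tgt_eq; [tyinf|homeq]
 | |- src2 _ = _ => eapply src_eq; [tyinf|homeq]
 | |- _ = _ => homeq
 end.

Ltac cstep := first [ rewrite inv_inv | rewrite inv_Ly | rewrite hL_Ly | rewrite hR_Ly
  | rewrite inv_v by side | rewrite hL_v by side | rewrite hR_v by side | rewrite vA by side ].
Ltac cstep_in H := first [ rewrite inv_inv in H | rewrite inv_Ly in H | rewrite hL_Ly in H | rewrite hR_Ly in H
  | rewrite inv_v in H by side | rewrite hL_v in H by side | rewrite hR_v in H by side | rewrite vA in H by side ].
Ltac wnorm_in H := unfold lam in H; repeat rewrite <- compA in H; repeat rewrite comp1l in H;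
  repeat rewrite comp1r in H; repeat rewrite <- compA in H.

Ltac tyof x := lazymatch x with
 | inv2 ?y => let p := tyof y in lazymatch p with (?A, ?B) => constr:((B, A)) end
 | _ => lazymatch goal with H : ty x ?A ?B |- _ => constr:((A, B)) end
end.

Ltac strip p w :=
 lazymatch p with
 | id1 _ => w
 | comp ?a ?p' => lazymatch w with comp a ?w' => strip p' w' end
 | _ => lazymatch w with comp p ?w' => w' | p => open_constr:(id1 _) end
 end.

Ltac pside := first [tyinf | side].
Ltac tyg := first [tyinf | eapply ty_conv; [tyinf|homeq|homeq]].
Ltac pside ::= first [tyg | side].

Section L2.
Variable C : TwoGroupoid.

Lemma Ly_v s p q t (U : Hom C q t) (x y : Cell C p q) (V : Hom C s p) :
  tgt2 x = src2 y -> vcomp (Ly U y V) (Ly U x V) = Ly U (vcomp y x) V.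
Proof. intros e. unfold Ly. rewrite hR_v, hL_v; auto.
  rewrite tgt2_h, src2_h, tgt2_id, src2_id; congruence. Qed.
Lemma Ly_sr s s' p q t (U : Hom C q t) (x : Cell C p q) (X : Hom C s' p) (V : Hom C s s') :
  Ly U x (comp X V) = Ly U (hcomp x (id2 X)) V.
Proof. unfold Ly. rewrite <- (hid X V), (hcompA x (id2 X) (id2 V)). auto. Qed.
Lemma Ly_sl s p q q' t (U : Hom C q' t) (X : Hom C q q') (x : Cell C p q) (V : Hom C s p) :
  Ly (comp U X) x V = Ly U (hcomp (id2 X) x) V.
Proof. unfold Ly. rewrite <- (hid U X), <- (hcompA (id2 U) (id2 X)). rewrite (hcompA (id2 X) x). auto. Qed.
Lemma Ly_id s p q t (U : Hom C q t) (f : Hom C p q) (V : Hom C s p) :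
  Ly U (id2 f) V = id2 (comp U (comp f V)).
Proof. unfold Ly. rewrite !hid. auto. Qed.

Lemma swL s r0 r' p q t (U : Hom C q t) (al : Cell C p q) (X : Hom C r' p) (be : Cell C r0 r')
  (V : Hom C s r0) A A' B B' U2 V1 (rr : Cell C s t) :
  ty al A A' -> ty be B B' -> U2 = comp U (comp A' X) -> V1 = comp X (comp B V) ->
  tgt2 rr = comp U (comp A V1) ->
  vcomp (Ly U2 be V) (vcomp (Ly U al V1) rr)
  = vcomp (Ly U al (comp X (comp B' V))) (vcomp (Ly (comp U (comp A X)) be V) rr).
Proof. intros HA HB e1 e2 e3. subst.
  rewrite !vAr by side.
  rewrite (Ly_sl U (comp A' X)), (Ly_sl U (comp A X)).
  rewrite !(Ly_sr U al X), !(Ly_sr U (hcomp al (id2 X))).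
  rewrite !Ly_v by side.
  destruct HA as [a1 a2]; destruct HB as [b1 b2].
  rewrite <- !interchange; try (rewrite ?tgt2_h, ?src2_h, ?tgt2_id, ?src2_id; congruence).
  rewrite (vid_l (x:=hcomp al (id2 X)) (f:=comp A' X)), (vid_r (x:=be) (f:=B)),
    (vid_r (x:=hcomp al (id2 X)) (f := comp A X)), (vid_l (x:=be) (f:=B')); auto;
   rewrite ?tgt2_h, ?src2_h, ?tgt2_id, ?src2_id; congruence.
Qed.

Lemma swR s r0 r' p q t (U : Hom C q t) (be : Cell C p q) (X : Hom C r' p) (al : Cell C r0 r')
  (V : Hom C s r0) A A' B B' U1 V2 (rr : Cell C s t) :
  ty al A A' -> ty be B B' -> U1 = comp U (comp B X) -> V2 = comp X (comp A' V) ->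
  tgt2 rr = comp U1 (comp A V) ->
  vcomp (Ly U be V2) (vcomp (Ly U1 al V) rr)
  = vcomp (Ly (comp U (comp B' X)) al V) (vcomp (Ly U be (comp X (comp A V))) rr).
Proof. intros HA HB e1 e2 e3. subst.
  rewrite !vAr by side.
  rewrite (Ly_sl U (comp B X)), (Ly_sl U (comp B' X)).
  rewrite !(Ly_sr U be X), !(Ly_sr U (hcomp be (id2 X))).
  rewrite !Ly_v by side.
  destruct HA as [a1 a2]; destruct HB as [b1 b2].
  rewrite <- !interchange; try (rewrite ?tgt2_h, ?src2_h, ?tgt2_id, ?src2_id; congruence).
  rewrite (vid_l (x:=al) (f:=A')), (vid_r (x:=hcomp be (id2 X)) (f:=comp B X)),
    (vid_r (x:=al) (f := A)), (vid_l (x:=hcomp be (id2 X)) (f:=comp B' X)); auto;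
   rewrite ?tgt2_h, ?src2_h, ?tgt2_id, ?src2_id; congruence.
Qed.

Lemma cnl s p q t (U : Hom C q t) (al : Cell C p q) (V : Hom C s p) A A' (rr : Cell C s t) :
  ty al A A' -> tgt2 rr = comp U (comp A' V) ->
  vcomp (Ly U al V) (vcomp (Ly U (inv2 al) V) rr) = rr.
Proof. intros HA e. rewrite vAr by side. rewrite Ly_v by side. rewrite inv2_r.
  destruct HA as [a1 a2]. rewrite a2, Ly_id. apply vid_l. auto. Qed.
Lemma cnr s p q t (U : Hom C q t) (al : Cell C p q) (V : Hom C s p) A A' (rr : Cell C s t) :
  ty al A A' -> tgt2 rr = comp U (comp A V) ->
  vcomp (Ly U (inv2 al) V) (vcomp (Ly U al V) rr) = rr.
Proof. intros HA e. rewrite vAr by side. rewrite Ly_v by side. rewrite inv2_l.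
  destruct HA as [a1 a2]. rewrite a1, Ly_id. apply vid_l. auto. Qed.

Lemma use_eq a b (P S c1 c2 rr : Cell C a b) A B B' D :
  vcomp P S = c1 -> c1 = c2 -> ty S A B -> ty P B' D -> B = B' -> tgt2 rr = A ->
  vcomp S rr = vcomp (inv2 P) (vcomp c2 rr).
Proof. intros h1 h2 hs hp eb e. subst B'. rewrite <- h2, <- h1.
  destruct hs as [s1 s2]; destruct hp as [p1 p2].
  assert (E: vcomp (inv2 P) (vcomp P S) = S).
  { rewrite vAr by (rewrite ?src2_inv; congruence). rewrite inv2_l. apply vid_l. congruence. }
  rewrite (vAr (x:=rr) (y:=vcomp P S)). rewrite E; auto.
  rewrite src2_v; congruence. rewrite tgt2_v, src2_inv; congruence. Qed.
End L2.

Ltac swap_core U1 al V1 U2 be V2 rr :=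
  let pa := tyof al in let pb := tyof be in
  lazymatch pa with (?A, ?A') => lazymatch pb with (?B, ?B') =>
  first [
    let W := strip U1 U2 in let X := strip A' W in
    rewrite (@swL _ _ _ _ _ _ _ U1 al X be V2 A A' B B' U2 V1 rr) by pside
  | let W := strip U2 U1 in let X := strip B W in
    rewrite (@swR _ _ _ _ _ _ _ U2 be X al V1 A A' B B' U1 V2 rr) by pside ]
  end end; wnorm_in_goal.

(* swap the layer with atom al (earlier) and the layer with atom be just above it *)
Ltac sw al be := match goal with
  |- context [vcomp (Ly ?U2 be ?V2) (vcomp (Ly ?U1 al ?V1) ?rr)] => swap_core U1 al V1 U2 be V2 rr end.
(* move layer with atom al one step up (later) *)
Ltac up al := match goal with
  |- context [vcomp (Ly ?U2 ?be ?V2) (vcomp (Ly ?U1 al ?V1) ?rr)] => swap_core U1 al V1 U2 be V2 rr end.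
(* move layer with atom be one step down (earlier) *)
Ltac dn be := match goal with
  |- context [vcomp (Ly ?U2 be ?V2) (vcomp (Ly ?U1 ?al ?V1) ?rr)] => swap_core U1 al V1 U2 be V2 rr end.

Ltac cancel1 := match goal with
 | |- context [vcomp (Ly ?U ?x ?V) (vcomp (Ly ?U (inv2 ?x) ?V) ?rr)] =>
     rewrite (@cnl _ _ _ _ _ U x V _ _ rr) by pside
 | |- context [vcomp (Ly ?U (inv2 ?x) ?V) (vcomp (Ly ?U ?x ?V) ?rr)] =>
     rewrite (@cnr _ _ _ _ _ U x V _ _ rr) by pside
 end.
Ltac cancels := repeat cancel1.

Section L3.
Variable C : TwoGroupoid.

Lemma faithful a b c (x y : Cell C a b) (f : Hom C c a) (Q : qinv f) A B :
  ty x A B -> ty y A B -> hcomp x (id2 f) = hcomp y (id2 f) -> x = y.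
Proof. intros hx hy e.
  assert (K: forall z : Cell C a b, ty z A B ->
     z = vcomp (hcomp (id2 B) (qi_et Q)) (vcomp (hcomp (hcomp z (id2 f)) (id2 (qi Q))) (inv2 (hcomp (id2 A) (qi_et Q))))).
  { intros z [z1 z2].
    assert (E1: hcomp z (qi_et Q) = vcomp z (hcomp (id2 A) (qi_et Q))).
    { transitivity (vcomp (hcomp z (id2 (id1 a))) (hcomp (id2 A) (qi_et Q))).
      2:{ rewrite hcomp1r; auto. }
      rewrite <- interchange.
      - rewrite vid_r by auto. rewrite vid_l. auto. apply qi_et_tgt.
      - rewrite tgt2_id; auto.
      - rewrite qi_et_tgt, src2_id; auto. }
    assert (E2: hcomp z (qi_et Q) = vcomp (hcomp (id2 B) (qi_et Q)) (hcomp z (id2 (comp f (qi Q))))).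
    { rewrite <- interchange.
      - rewrite vid_l by auto. rewrite vid_r. auto. apply qi_et_src.
      - rewrite src2_id; auto.
      - rewrite tgt2_id, qi_et_src; auto. }
    rewrite <- hid, hcompA in E2.
    assert (hz: ty z A B) by (split; auto).
    rewrite (vAr (x:=inv2 (hcomp (id2 A) (qi_et Q))) (y:=hcomp (hcomp z (id2 f)) (id2 (qi Q))) (z:= hcomp (id2 B) (qi_et Q))) by side.
    rewrite <- E2, E1. rewrite vA by side. rewrite inv2_r. rewrite tgt2_h, tgt2_id, qi_et_tgt.
    rewrite <- hcomp_id2. rewrite hcomp1r. rewrite vid_r; auto. }
  rewrite (K x hx), (K y hy), e. auto.
Qed.

Lemma frame a b (x y Tc Qc : Cell C a b) A B A0 D :
  ty x A B -> ty y A B -> ty Tc B D -> ty Qc A0 A ->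
  vcomp Tc (vcomp x Qc) = vcomp Tc (vcomp y Qc) -> x = y.
Proof. intros hx hy ht hq e.
  assert (K: forall z, ty z A B -> z = vcomp (inv2 Tc) (vcomp (vcomp Tc (vcomp z Qc)) (inv2 Qc))).
  { intros z hz. rewrite !vA by side. rewrite inv2_r.
    destruct hq as [q1 q2]. rewrite q2. rewrite vid_r by (destruct hz; auto).
    rewrite vAr by side. rewrite inv2_l. destruct ht as [t1 t2]. rewrite t1. symmetry. apply vid_l. destruct hz; auto. }
  rewrite (K x hx), (K y hy), e. auto.
Qed.
End L3.

Lemma Ly_vd (C : TwoGroupoid) s p q t (U : Hom C q t) (x y : Cell C p q) (V : Hom C s p) :
  tgt2 x = src2 y -> Ly U (vcomp y x) V = vcomp (Ly U y V) (Ly U x V).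
Proof. intros; symmetry; apply Ly_v; auto. Qed.
Lemma Ly_Ly (C : TwoGroupoid) s s' p q t t' (U : Hom C t t') (U' : Hom C q t) (x : Cell C p q)
  (V' : Hom C s' p) (V : Hom C s s') : Ly U (Ly U' x V') V = Ly (comp U U') x (comp V' V).
Proof. change (hcomp (id2 U) (hcomp (Ly U' x V') (id2 V)) = Ly (comp U U') x (comp V' V)).
  rewrite hR_Ly, hL_Ly. auto. Qed.
Lemma Ly_inv (C : TwoGroupoid) s p q t (U : Hom C q t) (x : Cell C p q) (V : Hom C s p) :
  Ly U (inv2 x) V = inv2 (Ly U x V).
Proof. rewrite inv_Ly; auto. Qed.

Ltac cstep ::= first [ rewrite inv_inv | rewrite inv_Ly | rewrite hL_Ly | rewrite hR_Ly | rewrite Ly_Ly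
  | rewrite inv_v by side | rewrite hL_v by side | rewrite hR_v by side | rewrite Ly_vd by side
  | rewrite vA by side ].
Ltac cstep_in H ::= first [ rewrite inv_inv in H | rewrite inv_Ly in H | rewrite hL_Ly in H | rewrite hR_Ly in H
  | rewrite Ly_Ly in H
  | rewrite inv_v in H by side | rewrite hL_v in H by side | rewrite hR_v in H by side
  | rewrite Ly_vd in H by side | rewrite vA in H by side ].
Ltac flat := repeat cstep; wnorm_in_goal.
Ltac flat_in H := repeat cstep_in H; wnorm_in H.

Ltac wheq E U V name := pose proof (f_equal (fun x => Ly U x V) E) as name; cbv beta in name; flat_in name.

Ltac clen c := lazymatch c with vcomp _ ?b => let n := clen b in constr:(S n) | _ => constr:(1) end.
Ltac ctop c n := lazymatch n with
  | 1 => lazymatch c with vcomp ?a _ => a end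
  | S ?n' => lazymatch c with vcomp ?a ?b => let t := ctop b n' in constr:(vcomp a t) end end.
Ltac cdrop c n := lazymatch n with
  | 0 => c
  | S ?n' => lazymatch c with vcomp _ ?b => cdrop b n' end end.

Ltac regroup c := lazymatch c with
  | vcomp ?a ?b => regroup b; rewrite (vAr (z:=a) (y:=b)) by pside
  | _ => idtac end.

(* E : c1 = c2 ; the bottom k layers of c1 occur (flattened) in the goal *)
Ltac use E k := lazymatch type of E with ?c1 = ?c2 =>
  let m := clen c1 in
  let d := eval compute in (m - k) in
  lazymatch d with
  | 0 => regroup c1; rewrite E; flat
  | _ => let P := ctop c1 d in let S := cdrop c1 d in
    let HPS := fresh in assert (HPS : vcomp P S = c1) by (flat; reflexivity);
    let TS := fresh in eassert (TS : ty S _ _) by tyinf;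
    let TP := fresh in eassert (TP : ty P _ _) by tyinf;
    regroup S; rewrite (use_eq HPS E TS TP) by side; clear HPS TS TP; flat
  end end.
Ltac dnat U be := match goal with
  |- context [vcomp (Ly U be ?V2) (vcomp (Ly ?U1 ?al ?V1) ?rr)] => swap_core U1 al V1 U be V2 rr end.
Ltac upat U al := match goal with
  |- context [vcomp (Ly ?U2 ?be ?V2) (vcomp (Ly U al ?V1) ?rr)] => swap_core U al V1 U2 be V2 rr end.

Ltac unfold_all := unfold mon22, mon23, mu3, mu, Mc, lam2, wh, whL, whR in *.
Ltac tg x := try rewrite (Ly_intro x).
Ltac tgi x H := try rewrite (Ly_intro x) in H.
Ltac tagall a0 a1 a2 a3 a4 a5 a6 a7 a8 a9 a10 a11 a12 a13 a14 a15 a16 a17 a18 a19 a20 a21 a22 a23 a24 a25 a26 a27 := tg a0; tg a1; tg a2; tg a3; tg a4; tg a5; tg a6; tg a7; tg a8; tg a9; tg a10; tg a11; tg a12; tg a13; tg a14; tg a15; tg a16; tg a17; tg a18; tg a19; tg a20; tg a21; tg (qi_ep a22); tg (qi_ep a23); tg (qi_ep a24); tg (qi_ep a25); tg (qi_ep a26); tg (qi_ep a27).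
Ltac tagall_in H a0 a1 a2 a3 a4 a5 a6 a7 a8 a9 a10 a11 a12 a13 a14 a15 a16 a17 a18 a19 a20 a21 a22 a23 a24 a25 a26 a27 := tgi a0 H; tgi a1 H; tgi a2 H; tgi a3 H; tgi a4 H; tgi a5 H; tgi a6 H; tgi a7 H; tgi a8 H; tgi a9 H; tgi a10 H; tgi a11 H; tgi a12 H; tgi a13 H; tgi a14 H; tgi a15 H; tgi a16 H; tgi a17 H; tgi a18 H; tgi a19 H; tgi a20 H; tgi a21 H; tgi (qi_ep a22) H; tgi (qi_ep a23) H; tgi (qi_ep a24) H; tgi (qi_ep a25) H; tgi (qi_ep a26) H; tgi (qi_ep a27) H.
Ltac pr H := let t := type of H in idtac "EQ" H t.
Ltac cnorm_in H a0 a1 a2 a3 a4 a5 a6 a7 a8 a9 a10 a11 a12 a13 a14 a15 a16 a17 a18 a19 a20 a21 a22 a23 a24 a25 a26 a27 := tagall_in H a0 a1 a2 a3 a4 a5 a6 a7 a8 a9 a10 a11 a12 a13 a14 a15 a16 a17 a18 a19 a20 a21 a22 a23 a24 a25 a26 a27; repeat cstep_in H; wnorm_in H.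
Ltac cnorm := repeat cstep; wnorm_in_goal.
Ltac toty T x := match type of T with src2 _ = ?A /\ tgt2 _ = ?B => change (ty x A B) in T end.
Ltac mkty H x := let T := fresh "T" in pose proof H as T; toty T x; wnorm_in T.
Ltac mktyb H x E := let s1 := fresh in let s2 := fresh in destruct H as [s1 [s2 E]];
  let T := fresh "T" in pose proof (conj s1 s2) as T; toty T x; wnorm_in T; clear s1 s2.

Unset Implicit Arguments.
Set Strict Implicit.

Theorem lemma6p10 (C : TwoGroupoid)
  (xi xj xk xl yi yj yk yl : Obj C)
  (* first data *)
  (phij : Hom C xj xi) (Qij : qinv phij) (phik : Hom C xk xi) (Qik : qinv phik)
  (phil : Hom C xl xi) (Qil : qinv phil) (phjk : Hom C xk xj) (Qjk : qinv phjk)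
  (phjl : Hom C xl xj) (Qjl : qinv phjl) (phkl : Hom C xl xk) (Qkl : qinv phkl)
  (gijk gijl gikl : Hom C xi xi) (gjkl : Hom C xj xj)
  (mijk : Cell C xk xi) (mijl mikl : Cell C xl xi) (mjkl : Cell C xl xj)
  (Hmijk : is_m gijk phik phij phjk mijk) (Hmijl : is_m gijl phil phij phjl mijl)
  (Hmikl : is_m gikl phil phik phkl mikl) (Hmjkl : is_m gjkl phjl phjk phkl mjkl)
  (nu : Cell C xi xi)
  (Hnu : is_nu Qij phik phil phjk phjl phkl gijk gijl gikl gjkl
           mijk mijl mikl mjkl nu)
  (* second data *)
  (psij : Hom C yj yi) (Qsij : qinv psij) (psik : Hom C yk yi) (Qsik : qinv psik)
  (psil : Hom C yl yi) (Qsil : qinv psil) (psjk : Hom C yk yj) (Qsjk : qinv psjk)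
  (psjl : Hom C yl yj) (Qsjl : qinv psjl) (pskl : Hom C yl yk) (Qskl : qinv pskl)
  (hijk hijl hikl : Hom C yi yi) (hjkl : Hom C yj yj)
  (nijk : Cell C yk yi) (nijl nikl : Cell C yl yi) (njkl : Cell C yl yj)
  (Hnijk : is_m hijk psik psij psjk nijk) (Hnijl : is_m hijl psil psij psjl nijl)
  (Hnikl : is_m hikl psil psik pskl nikl) (Hnjkl : is_m hjkl psjl psjk pskl njkl)
  (nu' : Cell C yi yi)
  (Hnu' : is_nu Qsij psik psil psjk psjl pskl hijk hijl hikl hjkl
            nijk nijl nikl njkl nu')
  (* comparison data *)
  (chi : Hom C xi yi) (Qci : qinv chi) (chj : Hom C xj yj) (Qcj : qinv chj)
  (chk : Hom C xk yk) (Qck : qinv chk) (chl : Hom C xl yl) (Qcl : qinv chl)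
  (thij thik thil : Hom C yi yi) (thjk thjl : Hom C yj yj) (thkl : Hom C yk yk)
  (zeij : Cell C xj yi) (zeik : Cell C xk yi) (zeil : Cell C xl yi)
  (zejk : Cell C xk yj) (zejl : Cell C xl yj) (zekl : Cell C xl yk)
  (Hzeij : is_zeta psij chj thij chi phij zeij)
  (Hzeik : is_zeta psik chk thik chi phik zeik)
  (Hzeil : is_zeta psil chl thil chi phil zeil)
  (Hzejk : is_zeta psjk chk thjk chj phjk zejk)
  (Hzejl : is_zeta psjl chl thjl chj phjl zejl)
  (Hzekl : is_zeta pskl chl thkl chk phkl zekl)
  (* the derived 2-arrows b, B', Z *)
  (bijk bijl bikl : Cell C yi yi) (bjkl : Cell C yj yj)
  (Hbijk : is_b phij phjk phik Qsij psjk psik Qci chj chk thij thjk thik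
             zeij zejk zeik gijk hijk mijk nijk bijk)
  (Hbijl : is_b phij phjl phil Qsij psjl psil Qci chj chl thij thjl thil
             zeij zejl zeil gijl hijl mijl nijl bijl)
  (Hbikl : is_b phik phkl phil Qsik pskl psil Qci chk chl thik thkl thil
             zeik zekl zeil gikl hikl mikl nikl bikl)
  (Hbjkl : is_b phjk phkl phjl Qsjk pskl psjl Qcj chk chl thjk thkl thjl
             zejk zekl zejl gjkl hjkl mjkl njkl bjkl)
  (B : Cell C yi yi) (HB : is_B Qsij Qsjk Qsik hijk nijk thkl B)
  (Z : Cell C yi yi) (HZ : is_Z Qij Qsij Qci Qcj thij zeij gjkl Z) :
  let LL := lam Qsij (lam Qsjk thkl) in          (* λ'_ij λ'_jk(ϑ_kl) *)
  let Ljk := lam Qsij thjk in                    (* λ'_ij(ϑ_jk) *)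
  let rnu := mon22 Qci (lam Qij gjkl) gijl gijk gikl nu in   (* r_i(ν_ijkl) *)
  let Lb := mon23 Qsij hjkl thjl (lam Qsjk thkl) thjk (lam Qcj gjkl) bjkl
    in                                           (* λ'_ij(b_jkl) *)
  vcomp (whL (comp (comp LL Ljk) thij) rnu)
    (vcomp (whL (comp LL Ljk) (whR Z (lam Qci gijl)))
       (vcomp (whR Lb (comp thij (lam Qci gijl)))
          (whL (lam Qsij hjkl) bijl)))
  = vcomp (whL LL (whR bijk (lam Qci gikl)))
      (vcomp (whR B (comp thik (lam Qci gikl)))
         (vcomp (whL hijk bikl) (whR nu' thil))).
Proof.
  cbv zeta.
  unfold is_m, is_zeta in *.
  mkty Hmijk mijk. mkty Hmijl mijl. mkty Hmikl mikl. mkty Hmjkl mjkl.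
  mkty Hnijk nijk. mkty Hnijl nijl. mkty Hnikl nikl. mkty Hnjkl njkl.
  mkty Hzeij zeij. mkty Hzeik zeik. mkty Hzeil zeil. mkty Hzejk zejk. mkty Hzejl zejl. mkty Hzekl zekl.
  mktyb Hnu nu EQnu. mktyb Hnu' nu' EQnu'.
  mktyb Hbijk bijk EQbijk. mktyb Hbijl bijl EQbijl. mktyb Hbikl bikl EQbikl. mktyb Hbjkl bjkl EQbjkl.
  mktyb HB B EQB. mktyb HZ Z EQZ.
  clear Hmijk Hmijl Hmikl Hmjkl Hnijk Hnijl Hnikl Hnjkl Hzeij Hzeik Hzeil Hzejk Hzejl Hzekl.
  pose proof (ty_ep Qij) as Eij. pose proof (ty_ep Qsij) as Esij. pose proof (ty_ep Qsjk) as Esjk.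
  pose proof (ty_ep Qsik) as Esik. pose proof (ty_ep Qci) as Eci. pose proof (ty_ep Qcj) as Ecj.
  eapply (faithful Qci); [unfold_all; tyinf|unfold_all; tyg|].
  eapply (faithful Qil); [unfold_all; tyinf|unfold_all; tyg|].
  eapply (frame
    (Tc := vcomp (whL (comp (comp (lam Qsij (lam Qsjk thkl)) (lam Qsij thjk)) thij) (whR (whL chi mijk) phkl))
      (vcomp (whL (comp (comp (lam Qsij (lam Qsjk thkl)) (lam Qsij thjk)) thij) (whL chi (whL gijk mikl)))
      (vcomp (whL (comp (comp (lam Qsij (lam Qsjk thkl)) (lam Qsij thjk)) thij) (whR (inv2 (Mc Qci gijk)) (comp gikl phil)))
             (whL (comp (comp (lam Qsij (lam Qsjk thkl)) (lam Qsij thjk)) thij) (whL (lam Qci gijk) (whR (inv2 (Mc Qci gikl)) phil))))))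
    (Qc := vcomp (whL (comp (lam Qsij hjkl) hijl) zeil) (id2 (comp (comp (lam Qsij hjkl) hijl) (comp psil chl))))).
  1-4: unfold_all; tyg.
  unfold_all. tagall nu nu' B Z bijk bijl bikl bjkl mijk mijl mikl mjkl nijk nijl nikl njkl zeij zeik zeil zejk zejl zekl Qij Qsij Qsjk Qsik Qci Qcj. cnorm.
  
  cnorm_in EQnu nu nu' B Z bijk bijl bikl bjkl mijk mijl mikl mjkl nijk nijl nikl njkl zeij zeik zeil zejk zejl zekl Qij Qsij Qsjk Qsik Qci Qcj.
  cnorm_in EQnu' nu nu' B Z bijk bijl bikl bjkl mijk mijl mikl mjkl nijk nijl nikl njkl zeij zeik zeil zejk zejl zekl Qij Qsij Qsjk Qsik Qci Qcj.
  cnorm_in EQbijk nu nu' B Z bijk bijl bikl bjkl mijk mijl mikl mjkl nijk nijl nikl njkl zeij zeik zeil zejk zejl zekl Qij Qsij Qsjk Qsik Qci Qcj.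
  cnorm_in EQbijl nu nu' B Z bijk bijl bikl bjkl mijk mijl mikl mjkl nijk nijl nikl njkl zeij zeik zeil zejk zejl zekl Qij Qsij Qsjk Qsik Qci Qcj.
  cnorm_in EQbikl nu nu' B Z bijk bijl bikl bjkl mijk mijl mikl mjkl nijk nijl nikl njkl zeij zeik zeil zejk zejl zekl Qij Qsij Qsjk Qsik Qci Qcj.
  cnorm_in EQbjkl nu nu' B Z bijk bijl bikl bjkl mijk mijl mikl mjkl nijk nijl nikl njkl zeij zeik zeil zejk zejl zekl Qij Qsij Qsjk Qsik Qci Qcj.
  cnorm_in EQB nu nu' B Z bijk bijl bikl bjkl mijk mijl mikl mjkl nijk nijl nikl njkl zeij zeik zeil zejk zejl zekl Qij Qsij Qsjk Qsik Qci Qcj.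
  cnorm_in EQZ nu nu' B Z bijk bijl bikl bjkl mijk mijl mikl mjkl nijk nijl nikl njkl zeij zeik zeil zejk zejl zekl Qij Qsij Qsjk Qsik Qci Qcj.
  sw zeil nu'.
  wheq EQbikl hijk (id1 xl) Eb1. pose proof (eq_sym Eb1) as Eb1'. use Eb1' 2.
  dn B; dn B; dn B.
  wheq EQB (id1 yi) (comp chk phkl) EB1. use EB1 1. cancels.
  dn bijk; dn bijk.
  wheq EQbijk (lam Qsij (lam Qsjk thkl)) phkl Eb2. pose proof (eq_sym Eb2) as Eb2'. use Eb2' 2. cancels.
  sw (inv2 mikl) (qi_ep Qci). cancels.
  sw zekl nijk.
  wheq EQnu' (id1 yi) chl En1. pose proof (eq_sym En1) as En1'. use En1' 3.
  wheq EQbijl (comp psij (comp hjkl (qi Qsij))) (id1 xl) Ea1. pose proof (eq_sym Ea1) as Ea1'. use Ea1' 2.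
  do 5 dn (qi_ep Qsij).
  do 4 dn bjkl.
  wheq EQbjkl psij (id1 xl) Ea2. pose proof (eq_sym Ea2) as Ea2'. use Ea2' 2.
  do 7 dnat (comp psij (comp psjk (comp thkl (qi Qsjk)))) (inv2 (qi_ep Qsij)).
  do 6 dnat (comp psij (comp psjk (comp thkl (comp (qi Qsjk) (comp (qi Qsij) (comp psij thjk)))))) (inv2 (qi_ep Qsij)).
  do 2 dn Z.
  wheq EQZ (comp (lam Qsij (lam Qsjk thkl)) (lam Qsij thjk)) phjl EZ1. use EZ1 2. cancels.
  sw (inv2 mjkl) zeij.
  wnorm_in_goal.
  match goal with |- context [Ly ?U (qi_ep Qci) (comp gijl (comp (qi Qci) (comp chi phil)))] =>
    do 2 dnat U (qi_ep Qci) end. cancels.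
  match goal with |- context [Ly ?U (qi_ep Qci) phil] => dnat U (qi_ep Qci) end. cancels.
  dn nu. cancels.
  wheq EQnu (comp (comp (lam Qsij (lam Qsjk thkl)) (lam Qsij thjk)) (comp thij chi)) (id1 xl) En2.
  pose proof (eq_sym En2) as En2'. use En2' 3. cancels.
  reflexivity.
Qed.
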